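(* Write $\hat B_n(x)=\sum_{k=0}^n\hat B(n,k)x^k$ and set $\hat B(n,k)=0$ for $k<0$ or $k>n$. Then $\hat B(n,0)=S_n$ for $n\ge1$, and for all $n\ge1$ and all integers $k$, $$\hat B(n+1,k)=(n+1-k)\big(\hat B(n,k)+\hat B(n,k-2)\big)+k\big(\hat B(n,k+1)+\hat B(n,k-1)\big)+\hat B(n,k+1)+\hat B(n,k-2).$$
   Context: $\mathcal B_n$ is the set of signed permutations (bijections $\sigma$ of $\{\pm1,\dots,\pm n\}$ with $\sigma(-i)=-\sigma(i)$), written as words $\sigma(1)\cdots\sigma(n)$ with $\sigma(0)=0$. An index $i\in\{0\}\cup[n-1]$ is an alternating descent of $\sigma$ if either $\sigma(i)<\sigma(i+1)$ and $i$ is even, or $\sigma(i)>\sigma(i+1)$ and $i$ is odd; $\hat B_n(x)=\sum_{\sigma\in\mathcal B_n}x^{\hat d_B(\sigma)}$ with $\hat d_B(\sigma)$ the number of alternating descents. $S_n$ is the number of snakes: $\tau\in\mathcal B_n$ with $\tau(1)>\tau(2)<\tau(3)>\cdots$ and $\tau(1)>0$; its exponential generating function is $1+\sum_{n>0}S_nx^n/n!=1/(\cos x-\sin x)$. *)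

(* Defs.v *)
From mathcomp Require Import all_boot all_order all_algebra.
Set Implicit Arguments. Unset Strict Implicit. Unset Printing Implicit Defensive.
Import Order.TTheory GRing.Theory Num.Theory.
Local Open Scope ring_scope.

(* A signed permutation sigma of {+-1,...,+-n} is encoded by the finite function
   f : 'I_n -> 'I_n * bool with f i = (j, b) meaning
   sigma(i+1) = (-1)^b (j+1); sigma is a bijection with sigma(-i) = -sigma(i)
   exactly when i |-> (f i).1 is injective (hence bijective). *)
Definition signed_perms (n : nat) : {set {ffun 'I_n -> 'I_n * bool}} :=
  [set f : {ffun 'I_n -> 'I_n * bool} | injectiveb (fun i => (f i).1)].

(* The word of sigma: sigma(i) for i in {1..n}, with sigma(0) = 0
   (and 0 outside the range, never used). *)
Definition sval (n : nat) (f : {ffun 'I_n -> 'I_n * bool}) (i : nat) : int :=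
  match i with
  | 0%N => 0
  | j.+1 => match insub j : option 'I_n with
            | Some o => (-1) ^+ (f o).2 * ((f o).1.+1)%:Z
            | None => 0
            end
  end.

Definition is_altdes (n : nat) (f : {ffun 'I_n -> 'I_n * bool}) (i : nat) : bool :=
  ((sval f i < sval f i.+1) && ~~ odd i) || ((sval f i > sval f i.+1) && odd i).

Definition altdes (n : nat) (f : {ffun 'I_n -> 'I_n * bool}) : nat :=
  #|[set i : 'I_n | is_altdes f i]|.

(* hat B(n,k): number of signed permutations with k alternating descents,
   set to 0 for k < 0 (for k > n it is automatically 0). *)
Definition Bhat (n : nat) (k : int) : int :=
  match k with
  | Posz m => (#|[set f in signed_perms n | altdes f == m]|)%:Z
  | Negz _ => 0
  end.

Definition is_snake (n : nat) (f : {ffun 'I_n -> 'I_n * bool}) : bool :=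
  (0 < sval f 1) &&
  [forall i : 'I_n, (0 < i)%N ==>
     (if odd i then sval f i > sval f i.+1 else sval f i < sval f i.+1)].

Definition snakes (n : nat) : nat := #|[set f in signed_perms n | is_snake f]|.

(* Main.v *)
From Pilot Require Import Defs.
From mathcomp Require Import all_boot all_order all_algebra all_fingroup.
Import Order.TTheory GRing.Theory Num.Theory.
Local Open Scope ring_scope.
Set Implicit Arguments. Unset Strict Implicit. Unset Printing Implicit Defensive.
Local Notation sval := Pilot.Defs.sval.

Lemma svalE n (f : {ffun 'I_n -> 'I_n * bool}) (o : 'I_n) :
  sval f o.+1 = (-1) ^+ (f o).2 * ((f o).1.+1)%:Z.
Proof. by rewrite /= valK. Qed.

Lemma sval_out n (f : {ffun 'I_n -> 'I_n * bool}) m : (n < m)%N -> sval f m = 0.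
Proof.
case: m => [//|m] /= H; rewrite insubF //; apply/negbTE; rewrite -leqNgt.
by rewrite -ltnS.
Qed.

Lemma sval_norm n (f : {ffun 'I_n -> 'I_n * bool}) m : `|sval f m| <= n%:Z.
Proof.
case: m => [|m] /=; first by rewrite normr0.
case: insubP => //= o _ _; rewrite normrM normrX normrN normr1 expr1n mul1r.
by rewrite /= lez_nat ltn_ord.
Qed.

From mathcomp Require Import zify.

Definition ins n (f : {ffun 'I_n -> 'I_n * bool}) (i : 'I_n.+1) (b : bool)
  : {ffun 'I_n.+1 -> 'I_n.+1 * bool} :=
  [ffun j => if unlift i j is Some j' then
               (lift ord_max (f j').1, (f j').2 (+) (i <= j')%N)
             else (ord_max, b)].

Section Ins.
Variables (n : nat) (f : {ffun 'I_n -> 'I_n * bool}) (i : 'I_n.+1) (b : bool).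
Local Notation g := (ins f i b).

Lemma ins_lift (o : 'I_n) :
  g (lift i o) = (lift ord_max (f o).1, (f o).2 (+) (i <= o)%N).
Proof. by rewrite ffunE liftK. Qed.

Lemma ins_i : g i = (ord_max, b).
Proof. by rewrite ffunE unlift_none. Qed.

Lemma sval_ins_lift (o : 'I_n) :
  sval g (bump i o).+1 = (-1) ^+ (i <= o)%N * sval f o.+1.
Proof.
have -> : bump i o = lift i o by [].
rewrite !svalE ins_lift /= signr_addb.
have -> : bump n (f o).1 = (f o).1 by rewrite /bump leqNgt ltn_ord.
by rewrite -!mulrA mulrCA.
Qed.

Lemma sval_ins_i : sval g i.+1 = (-1) ^+ b * (n.+1)%:Z.
Proof. by rewrite svalE ins_i. Qed.

Lemma sval_ins_le m : (m <= i)%N -> sval g m = sval f m.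
Proof.
case: m => [//|m] Hm.
have Hmn : (m < n)%N by rewrite (leq_trans Hm) // -ltnS.
have := sval_ins_lift (Ordinal Hmn); rewrite /bump /=.
by rewrite leqNgt Hm /= add0n mul1r.
Qed.

Lemma sval_ins_gt m : (i < m)%N -> (m <= n)%N -> sval g m.+1 = - sval f m.
Proof.
case: m => [//|m] Him Hmn.
have := sval_ins_lift (Ordinal Hmn); rewrite /bump /=.
by rewrite -ltnS Him add1n expr1 mulN1r.
Qed.

End Ins.

Definition alt (x y : int) (p : bool) := ((x < y) && ~~ p) || ((y < x) && p).

Lemma is_altdesE n (f : {ffun 'I_n -> 'I_n * bool}) j :
  is_altdes f j = alt (sval f j) (sval f j.+1) (odd j).
Proof. by []. Qed.

Lemma altN x y p : alt (- x) (- y) (~~ p) = alt x y p.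
Proof. by rewrite /alt !ltrN2 negbK orbC. Qed.

Lemma altdesE n (f : {ffun 'I_n -> 'I_n * bool}) :
  altdes f = (\sum_(0 <= j < n) is_altdes f j)%N.
Proof.
rewrite /altdes -sum1_card big_mkcond /= big_mkord.
by apply: eq_bigr => j _; rewrite inE; case: is_altdes.
Qed.

Section InsAlt.
Variables (n : nat) (f : {ffun 'I_n -> 'I_n * bool}) (i : 'I_n.+1) (b : bool).
Local Notation g := (ins f i b).

Lemma ag_i : is_altdes g i = (b == odd i).
Proof.
rewrite is_altdesE sval_ins_i sval_ins_le //.
have := sval_norm f i; rewrite ler_norml => /andP[h1 h2].
move: (sval f i) h1 h2 => x h1 h2.
rewrite -[RHS]/(eqb b (odd i)); case: b; case: (odd i); rewrite /alt /= ?expr1 ?expr0 ?andbT ?andbF ?orbF ?mulN1r ?mul1r /=; first [lia | (apply/negbTE; rewrite -leNgt; lia)].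
Qed.

Lemma ag_i1 : (i < n)%N -> is_altdes g i.+1 = (b == odd i).
Proof.
move=> Hi; rewrite is_altdesE sval_ins_i sval_ins_gt //.
have := sval_norm f i.+1; rewrite ler_norml => /andP[h1 h2].
move: (sval f i.+1) h1 h2 => x h1 h2.
rewrite -[RHS]/(eqb b (odd i)) [odd i.+1]/=; case: b; case: (odd i); rewrite /alt /= ?expr1 ?expr0 ?andbT ?andbF ?orbF ?mulN1r ?mul1r /=; first [lia | (apply/negbTE; rewrite -leNgt; lia)].
Qed.

Lemma ag_lt j : (j < i)%N -> is_altdes g j = is_altdes f j.
Proof. by move=> H; rewrite !is_altdesE !sval_ins_le // ltnW. Qed.

Lemma ag_gt j : (i < j)%N -> (j < n)%N -> is_altdes g j.+1 = is_altdes f j.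
Proof.
move=> H1 H2; rewrite !is_altdesE.
rewrite (sval_ins_gt _ _ H1 (ltnW H2)) (sval_ins_gt _ _ (ltn_trans H1 (ltnSn j)) H2).
by rewrite [odd j.+1]/= altN.
Qed.

End InsAlt.

Section InsAltdes.
Variables (n : nat) (f : {ffun 'I_n -> 'I_n * bool}) (i : 'I_n.+1) (b : bool).
Local Notation g := (ins f i b).

Lemma altdes_ins_lt : (i < n)%N ->
  (altdes g + is_altdes f i = altdes f + 2 * (b == odd i))%N.
Proof.
move=> Hi; rewrite !altdesE.
rewrite (big_cat_nat _ (n := i)) //=; last by rewrite ltnW.
rewrite [in RHS](big_cat_nat _ (n := i)) //=; last by rewrite ltnW.
rewrite (@big_ltn _ _ _ i n.+1); last by rewrite ltnS ltnW.
rewrite (@big_ltn _ _ _ i.+1 n.+1); last by rewrite ltnS.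
rewrite (@big_ltn _ _ _ i n) //.
rewrite (@big_add1 _ _ _ i.+1 n.+1) /=.
rewrite (@eq_big_nat _ _ _ 0 i (fun j => is_altdes g j : nat) (fun j => is_altdes f j : nat));
  last by move=> j /andP[_ Hj]; rewrite ag_lt.
rewrite (@eq_big_nat _ _ _ i.+1 n (fun j => is_altdes g j.+1 : nat) (fun j => is_altdes f j : nat));
  last by move=> j /andP[Hj1 Hj2]; rewrite ag_gt.
rewrite ag_i ag_i1 //.
case: (b == odd i); case: (is_altdes f i) => /=; lia.
Qed.

Lemma altdes_ins_n : val i = n -> altdes g = (altdes f + (b == odd n))%N.
Proof.
move=> Hi; rewrite !altdesE big_nat_recr //=.
rewrite (@eq_big_nat _ _ _ 0 n (fun j => is_altdes g j : nat) (fun j => is_altdes f j : nat));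
  last by move=> j /andP[_ Hj]; rewrite ag_lt // Hi.
by move: (ag_i f i b); rewrite Hi => ->.
Qed.

End InsAltdes.

Lemma altdes_sum n (f : {ffun 'I_n -> 'I_n * bool}) :
  (altdes f)%:Z = \sum_(i < n) ((is_altdes f i : nat)%:Z).
Proof. rewrite altdesE big_mkord -natz natr_sum; apply: eq_bigr => i _; by rewrite natz. Qed.

Lemma per_f n (f : {ffun 'I_n -> 'I_n * bool}) (k : int) :
  \sum_(i : 'I_n.+1) \sum_(b : bool) (((altdes (ins f i b))%:Z == k)%:R : int) =
  let d := (altdes f)%:Z in
  d * ((d - 1 == k)%:R + (d + 1 == k)%:R) + (n%:Z - d) * ((d == k)%:R + (d + 2 == k)%:R)
  + (d == k)%:R + (d + 1 == k)%:R.
Proof.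
rewrite big_ord_recr /= !big_bool /=.
rewrite !altdes_ins_n //.
set d := (altdes f)%:Z.
set X := ((d - 1 == k)%:R + (d + 1 == k)%:R : int).
set Y := ((d == k)%:R + (d + 2 == k)%:R : int).
have E : forall i : 'I_n, \sum_(b : bool) (((altdes (ins f (widen_ord (leqnSn n) i) b))%:Z == k)%:R : int)
   = (is_altdes f i : nat)%:Z * X + (1 - (is_altdes f i : nat)%:Z) * Y.
  move=> i; rewrite big_bool /=.
  have H := fun b => @altdes_ins_lt n f (widen_ord (leqnSn n) i) b (ltn_ord i).
  have Ht := H true; have Hf := H false.
  change (nat_of_ord (widen_ord (leqnSn n) i)) with (nat_of_ord i) in Ht, Hf.
  have -> : (altdes (ins f (widen_ord (leqnSn n) i) true))%:Z =
     d + 2 * ((true == odd i) : nat)%:Z - (is_altdes f i : nat)%:Z by rewrite /d; lia.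
  have -> : (altdes (ins f (widen_ord (leqnSn n) i) false))%:Z =
     d + 2 * ((false == odd i) : nat)%:Z - (is_altdes f i : nat)%:Z by rewrite /d; lia.
  rewrite /X /Y; case: (odd i); case: (is_altdes f i); rewrite /= ?mul1r ?mul0r ?subr0 ?add0r ?addr0 ?subrr ?mulr0;
  first [ (congr (_ + _); congr ((_ == _)%:R); lia) | (rewrite addrC; congr (_ + _); congr ((_ == _)%:R); lia) ].
rewrite (eq_bigr _ (fun i _ => E i)) big_split /= -!mulr_suml sumrB sumr_const card_ord -altdes_sum -/d.
rewrite !PoszD -/d; case: (odd n) => /=;
  rewrite (natz n) (_ : d + 0%Z = d) ?addr0 // -!addrA;
  first [done | by rewrite [X in _ + (_ + X) = _]addrC].
Qed.

Lemma ident (n : nat) (d k : int) :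
  d * ((d - 1 == k)%:R + (d + 1 == k)%:R) + (n%:Z - d) * ((d == k)%:R + (d + 2 == k)%:R)
  + (d == k)%:R + (d + 1 == k)%:R =
  (n.+1%:Z - k) * ((d == k)%:R + (d == k - 2)%:R)
  + k * ((d == k + 1)%:R + (d == k - 1)%:R)
  + (d == k + 1)%:R + (d == k - 2)%:R :> int.
Proof.
have e1 : (d - 1 == k) = (d == k + 1) by apply/eqP/eqP; lia.
have e2 : (d + 1 == k) = (d == k - 1) by apply/eqP/eqP; lia.
have e3 : (d + 2 == k) = (d == k - 2) by apply/eqP/eqP; lia.
rewrite e1 e2 e3.
case: (eqVneq d k) => h1; case: (eqVneq d (k + 1)) => h2; case: (eqVneq d (k - 1)) => h3;
  case: (eqVneq d (k - 2)) => h4; rewrite /= ?mulr1 ?mulr0 ?addr0 ?add0r; try lia.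
Qed.

Lemma BhatE n k :
  Bhat n k = \sum_(f in signed_perms n) (((altdes f)%:Z == k)%:R : int).
Proof.
case: k => [m|m] /=.
  rewrite -sum1_card -natz natr_sum big_mkcond [RHS]big_mkcond /=.
  apply: eq_bigr => f _; rewrite inE eqz_nat.
  by case: (f \in signed_perms n); case: (altdes f == m).
by rewrite big1.
Qed.

Definition pm n (x : {perm 'I_n} * {ffun 'I_n -> bool}) : {ffun 'I_n -> 'I_n * bool} :=
  [ffun i => (x.1 i, x.2 i)].

Lemma pm_inj n : injective (@pm n).
Proof.
move=> [p s] [p' s'] /ffunP H.
have H1 : p = p' by apply/permP => i; have := H i; rewrite !ffunE => -[].
have H2 : s = s' by apply/ffunP => i; have := H i; rewrite !ffunE => -[].
by rewrite H1 H2.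
Qed.

Lemma SP_pm n : signed_perms n = [set pm x | x in [set: {perm 'I_n} * {ffun 'I_n -> bool}]].
Proof.
apply/setP => f; apply/idP/idP.
  rewrite inE => /injectiveP Hf.
  apply/imsetP; exists (perm Hf, [ffun i => (f i).2]); first by rewrite inE.
  by apply/ffunP => i; rewrite !ffunE permE /=; case: (f i).
case/imsetP => x _ ->; rewrite inE; apply/injectiveP => i j.
by rewrite !ffunE /=; apply: perm_inj.
Qed.

Lemma card_SP n : #|signed_perms n| = (n`! * 2 ^ n)%N.
Proof.
by rewrite SP_pm card_imset ?cardsT ?card_prod ?card_Sn ?card_ffun ?card_bool ?card_ord //; apply: pm_inj.
Qed.

Definition hins n (x : {ffun 'I_n -> 'I_n * bool} * ('I_n.+1 * bool)) :=
  ins x.1 x.2.1 x.2.2.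

Lemma ins_fst_max n (f : {ffun 'I_n -> 'I_n * bool}) i b j :
  ((ins f i b j).1 == ord_max) = (j == i).
Proof.
rewrite ffunE; case: unliftP => [o ->|->]; last by rewrite !eqxx.
rewrite /= eq_sym (negbTE (neq_lift _ _)); apply/esym/negbTE.
by rewrite eq_sym; apply: neq_lift.
Qed.

Lemma hins_inj n : injective (@hins n).
Proof.
move=> [f [i b]] [f' [i' b']]; rewrite /hins /= => E.
have Hi : i = i'.
  have := ins_fst_max f' i' b' i; rewrite -E ins_i eqxx => /esym /eqP //.
subst i'.
have Hb : b = b' by have := ins_i f' i b'; rewrite -E ins_i => -[].
subst b'.
congr (_, _); apply/ffunP => o.
have := ins_lift f' i b o; rewrite -E ins_lift => -[h1 h2].
have {h1} : (f o).1 = (f' o).1 by apply: val_inj; have := congr1 (unbump n) h1; rewrite !bumpK.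
move: h2; case: (f o) => v s; case: (f' o) => v' s' /=.
by move=> /addIb -> ->.
Qed.

Lemma ins_SP n (f : {ffun 'I_n -> 'I_n * bool}) i b :
  f \in signed_perms n -> ins f i b \in signed_perms n.+1.
Proof.
rewrite !inE => /injectiveP Hf; apply/injectiveP => j1 j2.
rewrite !ffunE; case: unliftP => [o1 ->|->]; case: unliftP => [o2 ->|->] //=.
- by move/lift_inj/Hf ->.
- by move=> E; have := neq_lift (@ord_max n) (f o1).1; rewrite E eqxx.
- by move=> E; have := neq_lift (@ord_max n) (f o2).1; rewrite -E eqxx.
Qed.

Lemma count_rec n k :
  Bhat n.+1 k = \sum_(f in signed_perms n) \sum_(i : 'I_n.+1) \sum_(b : bool)
                  (((altdes (ins f i b))%:Z == k)%:R : int).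
Proof.
set D := setX (signed_perms n) [set: 'I_n.+1 * bool].
have HD : [set hins x | x in D] = signed_perms n.+1.
  apply/eqP; rewrite eqEcard; apply/andP; split.
    apply/subsetP => g /imsetP [x]; rewrite inE => /andP[Hx _] ->.
    exact: ins_SP.
  rewrite card_imset; last exact: hins_inj.
  rewrite cardsX !card_SP cardsT card_prod card_ord card_bool factS expnS.
  by rewrite leq_eqVlt; apply/orP; left; apply/eqP; nia.
rewrite BhatE -HD big_imset /=; last by move=> x y _ _; apply: hins_inj.
rewrite /D.
rewrite (eq_bigl (fun x => (x.1 \in signed_perms n) && (x.2 \in [set: 'I_n.+1 * bool]))); last first.
  by move=> x; rewrite inE.
rewrite -(pair_big (fun f => f \in signed_perms n) (fun y => y \in [set: 'I_n.+1 * bool])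
   (fun f y => (((altdes (hins (f, y)))%:Z == k)%:R : int))) /=.
apply: eq_bigr => f _.
rewrite (eq_bigl xpredT) ?pair_big //; last by move=> y; rewrite inE.
Qed.

Definition negf n (f : {ffun 'I_n -> 'I_n * bool}) : {ffun 'I_n -> 'I_n * bool} :=
  [ffun i => ((f i).1, ~~ (f i).2)].

Lemma negfK n : involutive (@negf n).
Proof. by move=> f; apply/ffunP => i; rewrite !ffunE /= negbK; case: (f i). Qed.

Lemma sval_neg n (f : {ffun 'I_n -> 'I_n * bool}) m : sval (negf f) m = - sval f m.
Proof.
case: m => [|m] /=; first by rewrite oppr0.
by case: insubP => [o _ _|_]; rewrite ?oppr0 // ffunE /= signrN mulNr.
Qed.

Lemma negSP n (f : {ffun 'I_n -> 'I_n * bool}) : (negf f \in signed_perms n) = (f \in signed_perms n).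
Proof.
rewrite !inE; apply/injectiveP/injectiveP => H i j E; apply: H; move: E; by rewrite !ffunE.
Qed.

Lemma sval_dist n (f : {ffun 'I_n -> 'I_n * bool}) (j : nat) :
  f \in signed_perms n -> (j < n)%N -> sval f j != sval f j.+1.
Proof.
rewrite inE => /injectiveP Hf Hj.
have Hn : forall o : 'I_n, `|sval f o.+1| = ((f o).1.+1)%:Z.
  move=> o; rewrite svalE normrM normrX normrN normr1 expr1n mul1r //.
case: j Hj => [|j] Hj.
  rewrite (svalE f (Ordinal Hj)) /=; apply/eqP => E.
  have := Hn (Ordinal Hj); rewrite svalE -E normr0 => /eqP; by [].
have Hj' : (j < n)%N by rewrite ltnW.
apply/eqP => E.
have := congr1 Num.norm E.
rewrite (Hn (Ordinal Hj')) (Hn (Ordinal Hj)) => -[] E2.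
have := congr1 val (Hf _ _ (val_inj E2)) => /= /eqP; by rewrite eqn_leq ltnn andbF.
Qed.

Lemma snake_equiv n (f : {ffun 'I_n -> 'I_n * bool}) :
  (0 < n)%N -> f \in signed_perms n -> (altdes f == 0%N) = is_snake (negf f).
Proof.
move=> Hn Hf.
pose cond (j : nat) := if odd j then sval f j < sval f j.+1 else sval f j.+1 < sval f j.
have S1 : (altdes f == 0%N) = [forall j : 'I_n, ~~ is_altdes f j].
  rewrite /altdes cards_eq0; apply/eqP/forallP => [H j | H].
    by have := in_set0 j; rewrite -H inE => ->.
  by apply/setP => j; rewrite !inE; exact: negbTE (H j).
have S2 : forall j : 'I_n, ~~ is_altdes f j = cond j.
  move=> j; have D := sval_dist Hf (ltn_ord j); rewrite is_altdesE /alt /cond.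
  move: D; move: (sval f j) (sval f j.+1) => x y D.
  case: (odd j); rewrite /= ?andbT ?andbF ?orbF.
    by rewrite -leNgt le_eqVlt (negbTE D).
  by rewrite -leNgt le_eqVlt eq_sym (negbTE D).
rewrite S1 /is_snake !sval_neg oppr_gt0.
apply/forallP/andP => [H | [H0 H]].
  split; first by have := S2 (Ordinal Hn); rewrite (H (Ordinal Hn)) /cond /=.
  apply/forallP => i; apply/implyP => _; rewrite !sval_neg !ltrN2.
  by have := S2 i; rewrite H /cond => /esym; case: (odd i).
move=> i; rewrite S2 /cond.
case: (posnP i) => [Hi | Hi].
  by rewrite Hi; exact: H0.
have := implyP (forallP H i) Hi; rewrite !sval_neg !ltrN2.
by case: (odd i).
Qed.

Theorem proposition3p2 :
  forall n : nat, (1 <= n)%N ->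
    Bhat n 0 = (snakes n)%:Z /\
    forall k : int,
      Bhat n.+1 k =
        (n.+1%:Z - k) * (Bhat n k + Bhat n (k - 2))
        + k * (Bhat n (k + 1) + Bhat n (k - 1))
        + Bhat n (k + 1) + Bhat n (k - 2).
Proof.
move=> n Hn; split.
  rewrite /= /snakes; congr Posz.
  have -> : [set f in signed_perms n | is_snake f] =
            [set negf f | f in [set f in signed_perms n | altdes f == 0%N]].
    apply/setP => f; rewrite inE; apply/andP/imsetP => [[H1 H2] | [g]].
      exists (negf f); last by rewrite negfK.
      by rewrite inE negSP H1 snake_equiv ?negSP // negfK.
    rewrite inE => /andP[H1 H2] ->; split; first by rewrite negSP.
    by rewrite -snake_equiv.
  by rewrite card_imset //; apply: (can_inj (@negfK n)).
move=> k.
rewrite count_rec !BhatE.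
under eq_bigr do rewrite per_f /= ident.
by rewrite !big_split /= -!mulr_sumr !big_split.
Qed.
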